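(* If $\Gamma_G$ is population monotonic, then $G$ has no induced subgraph isomorphic to the cycle $C_4$.
   Context: $G=(V,E;w)$ is a finite simple graph with edge weights $w:E\to\mathbb{R}$, $w_e>0$ for all $e\in E$. The matching game on $G$ is the cooperative game $\Gamma_G=(N,\gamma)$ with player set $N=V$ and, for $S\subseteq N$, $\gamma(S)$ equal to the maximum weight of a matching in the induced subgraph $G[S]$ (so $\gamma(\emptyset)=0$). A population monotonic allocation scheme (PMAS) is a family $(\boldsymbol{x}_S)_{\emptyset\neq S\subseteq N}$ with $\boldsymbol{x}_S=(x_{S,i})_{i\in S}\in\mathbb{R}^S$ such that (efficiency) $\sum_{i\in S}x_{S,i}=\gamma(S)$ for every nonempty $S\subseteq N$, and (monotonicity) $x_{S,i}\le x_{T,i}$ whenever $\emptyset\ne S\subseteq T\subseteq N$ and $i\in S$. $\Gamma_G$ is called population monotonic if it admits a PMAS. *)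

(* Defs.v *)
From mathcomp Require Import all_boot all_order all_algebra.
Set Implicit Arguments. Unset Strict Implicit. Unset Printing Implicit Defensive.
Import Order.TTheory GRing.Theory Num.Theory.
Local Open Scope ring_scope.

(* A finite simple graph on vertex type V: edge set E, a set of 2-element
   subsets of V.  Edge weights: w : {set V} -> R (only values on E matter). *)
Definition simple_graph (V : finType) (E : {set {set V}}) : Prop :=
  forall f, f \in E -> #|f| = 2%N.

Definition is_matching_in (V : finType) (E : {set {set V}}) (S : {set V})
  (M : {set {set V}}) : bool :=
  [&& M \subset E, [forall f in M, f \subset S] & trivIset M].

(* gamma(S) = maximum weight of a matching in G[S]
   (the empty matching gives 0, so the max with default 0 is exact). *)
Definition gamma (R : realFieldType) (V : finType) (E : {set {set V}})
  (w : {set V} -> R) (S : {set V}) : R :=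
  \big[Num.max/0]_(M : {set {set V}} | is_matching_in E S M) \sum_(f in M) w f.

(* Population monotonic allocation scheme: x S i is the payoff of i in S. *)
Definition is_PMAS (R : realFieldType) (V : finType) (E : {set {set V}})
  (w : {set V} -> R) (x : {set V} -> V -> R) : Prop :=
  (forall S : {set V}, S != set0 -> \sum_(i in S) x S i = gamma E w S) /\
  (forall (S T : {set V}) (i : V), S != set0 -> S \subset T -> i \in S ->
      x S i <= x T i).

Definition population_monotonic (R : realFieldType) (V : finType)
  (E : {set {set V}}) (w : {set V} -> R) : Prop :=
  exists x : {set V} -> V -> R, is_PMAS E w x.

Definition has_induced_C4 (V : finType) (E : {set {set V}}) : Prop :=
  exists a b c d : V,
    uniq [:: a; b; c; d] /\
    [set a; b] \in E /\ [set b; c] \in E /\ [set c; d] \in E /\ [set d; a] \in E /\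
    [set a; c] \notin E /\ [set b; d] \notin E.

(* Main.v *)
Require Import Defs.
From mathcomp Require Import all_boot all_order all_algebra.
From mathcomp Require Import ring lra.
Import Order.TTheory GRing.Theory Num.Theory.
Local Open Scope ring_scope.

Section Aux.
Variables (R : realFieldType) (V : finType) (E : {set {set V}}) (w : {set V} -> R).

Lemma gamma_ge (S : {set V}) e : e \in E -> e \subset S -> w e <= gamma E w S.
Proof.
move=> eE eS; rewrite /gamma (bigD1 [set e]) /=; last first.
  apply/and3P; split; first by rewrite sub1set.
    by apply/forall_inP => f; rewrite inE => /eqP->.
  exact: trivIset1.
by rewrite le_max big_set1 lexx.
Qed.

Lemma two_sub3 (a b c : V) (f : {set V}) : #|f| = 2%N -> f \subset [set a; b; c] ->
  [\/ f = [set a; b], f = [set b; c] | f = [set a; c]].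
Proof.
move=> hf sub; have [x [y [xy fe]]] : exists x y, x != y /\ f = [set x; y].
  by apply: (elimT (cards2P f)); rewrite hf.
subst f.
have hx : x \in [set a; b; c] by apply: (subsetP sub); rewrite !inE eqxx.
have hy : y \in [set a; b; c] by apply: (subsetP sub); rewrite !inE eqxx orbT.
move: hx hy xy; rewrite !inE -!orbA => /or3P[]/eqP-> /or3P[]/eqP->; rewrite ?eqxx //= => _.
- by constructor 1.
- by constructor 3.
- by constructor 1; rewrite setUC.
- by constructor 2.
- by constructor 3; rewrite setUC.
- by constructor 2; rewrite setUC.
Qed.

Lemma gamma_le3 (a b c : V) : simple_graph E -> (forall f, f \in E -> 0 < w f) ->
  a != b -> b != c -> a != c -> [set a; b] \in E -> [set a; c] \notin E ->
  w [set b; c] <= w [set a; b] ->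
  gamma E w [set a; b; c] <= w [set a; b].
Proof.
move=> sg wpos ab bc ac abE acE wle.
have w0 : 0 <= w [set a; b] by apply/ltW/wpos.
rewrite /gamma; apply: (big_ind (fun v => v <= w [set a; b])) => //.
  by move=> x y hx hy; rewrite ge_max hx hy.
move=> M /and3P [ME /forall_inP MS Mt].
have Msub : M \subset [set [set a; b]; [set b; c]].
  apply/subsetP => f fM; have fE := subsetP ME f fM.
  case: (@two_sub3 a b c f (sg f fE) (MS f fM)) => fe; rewrite fe !inE ?eqxx ?orbT //.
  by rewrite -fe fE in acE.
have abbc : [set a; b] != [set b; c].
  apply/negP => /eqP e; have : a \in [set b; c] by rewrite -e !inE eqxx.
  by rewrite !inE (negbTE ab) (negbTE ac).
have Mcase : forall e, 0 <= w e -> M \subset [set e] -> \sum_(f in M) w f <= w e.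
  move=> e e0; rewrite subset1 => /orP [] /eqP ->; first by rewrite big_set1.
  by rewrite big_set0.
case: (boolP ([set a; b] \in M)) => hab; case: (boolP ([set b; c] \in M)) => hbc.
- move/trivIsetP: Mt => /(_ _ _ hab hbc abbc) dis.
  have := @disjointFr _ _ _ b dis; rewrite !inE !eqxx orbT.
  by move=> /(_ isT).
- apply: Mcase => //; apply/subsetP => f fM.
  move: (subsetP Msub f fM); rewrite !inE => /orP [] // /eqP fe.
  by rewrite -fe fM in hbc.
- apply: le_trans wle; apply: Mcase; first by apply: ltW; apply: wpos; apply: (subsetP ME).
  apply/subsetP => f fM.
  move: (subsetP Msub f fM); rewrite !inE => /orP [] // /eqP fe.
  by rewrite -fe fM in hab.
- apply: le_trans w0; rewrite le_eqVlt; apply/orP; left; apply/eqP.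
  apply: big_pred0 => f; apply/negP => fM.
  move: (subsetP Msub f fM); rewrite !inE => /orP [] /eqP fe.
    by rewrite -fe fM in hab.
  by rewrite -fe fM in hbc.
Qed.

Lemma sum2 (F : V -> R) a b : a != b -> \sum_(i in [set a; b]) F i = F a + F b.
Proof. by move=> ab; rewrite big_setU1 ?inE // big_set1. Qed.

Lemma sum3 (F : V -> R) a b c : a != b -> b != c -> a != c ->
  \sum_(i in [set a; b; c]) F i = F a + F b + F c.
Proof.
move=> ab bc ac.
rewrite (big_setD1 a) ?inE ?eqxx //= (big_setD1 b) ?inE ?eqxx ?orbT ?(negbTE ab) //=.
have -> : [set a; b; c] :\ a :\ b = [set c].
  apply/setP => y; rewrite !inE.
  case: (eqVneq y c) => [->|yc].
    by rewrite orbT andbT (eq_sym c b) bc (eq_sym c a) ac.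
  rewrite orbF; case: (eqVneq y b) => //= _; by case: (eqVneq y a).
  by rewrite big_set1 addrA.
by rewrite andbT eq_sym.
Qed.

Lemma half (x : {set V} -> V -> R) a b c : is_PMAS E w x -> simple_graph E ->
  (forall f, f \in E -> 0 < w f) ->
  a != b -> b != c -> a != c -> [set a; b] \in E -> [set a; c] \notin E ->
  w [set b; c] <= w [set a; b] -> x [set b; c] c <= 0.
Proof.
move=> [eff mono] sg wpos ab bc ac abE acE wle.
set T := [set a; b; c].
have h1 : x [set b; c] c <= x T c.
  apply: mono; last by rewrite !inE eqxx orbT.
    by apply/set0Pn; exists b; rewrite !inE eqxx.
  by apply/subsetP => y; rewrite /T !inE => /orP [] ->; rewrite ?orbT.
have sab : [set a; b] \subset T.
  by apply/subsetP => y; rewrite /T !inE => /orP [] ->; rewrite ?orbT.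
have nab : [set a; b] != set0 by apply/set0Pn; exists a; rewrite !inE eqxx.
have h2 : x [set a; b] a <= x T a by apply: mono; rewrite ?inE ?eqxx.
have h3 : x [set a; b] b <= x T b by apply: mono; rewrite ?inE ?eqxx ?orbT.
have nT : T != set0 by apply/set0Pn; exists a; rewrite !inE eqxx.
have h4 := eff T nT; rewrite sum3 // in h4.
have h5 := eff _ nab; rewrite sum2 // in h5.
have h6 := @gamma_ge _ _ abE (subxx _).
have h7 := @gamma_le3 a b c sg wpos ab bc ac abE acE wle.
rewrite -/T in h7.
lra.
Qed.
End Aux.

Lemma final (R : realFieldType) (V : finType) (E : {set {set V}})
  (w : {set V} -> R) (x : {set V} -> V -> R) (a b c d : V) :
  simple_graph E -> (forall f, f \in E -> 0 < w f) -> is_PMAS E w x ->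
  a != b -> b != c -> a != c -> c != d -> b != d ->
  [set a; b] \in E -> [set b; c] \in E -> [set c; d] \in E ->
  [set a; c] \notin E -> [set b; d] \notin E ->
  w [set b; c] <= w [set a; b] -> w [set b; c] <= w [set c; d] -> False.
Proof.
move=> sg wpos px ab bc ac cd bd abE bcE cdE acE bdE w1 w2.
have h1 := @half _ _ _ _ _ a b c px sg wpos ab bc ac abE acE w1.
have h2 : x [set c; b] b <= 0.
  apply: (@half _ _ _ _ _ d c b px sg wpos).
  - by rewrite eq_sym.
  - by rewrite eq_sym.
  - by rewrite eq_sym.
  - by rewrite setUC.
  - by rewrite setUC.
  - by rewrite setUC [[set d; c]]setUC.
rewrite setUC in h2.
have nbc : [set b; c] != set0 by apply/set0Pn; exists b; rewrite !inE eqxx.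
have h3 := (px.1 _ nbc); rewrite sum2 // in h3.
have h4 := @gamma_ge _ _ E w _ _ bcE (subxx _).
have h5 := wpos _ bcE.
lra.
Qed.


Theorem mainTheorem8 (R : realFieldType) (V : finType) (E : {set {set V}})
  (w : {set V} -> R) :
  simple_graph E ->
  (forall f, f \in E -> 0 < w f) ->
  population_monotonic E w ->
  ~ has_induced_C4 E.
Proof.
move=> sg wpos [x px] [a [b [c [d [u [abE [bcE [cdE [daE [acE bdE]]]]]]]]]].
move: u; rewrite /= !inE !negb_or => /and4P [/and3P [ab ac ad] /andP [bc bd] cd _].
have baE : [set b; a] \in E by rewrite setUC.
have cbE : [set c; b] \in E by rewrite setUC.
have dcE : [set d; c] \in E by rewrite setUC.
have adE : [set a; d] \in E by rewrite setUC.
have caE : [set c; a] \notin E by rewrite setUC.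
have dbE : [set d; b] \notin E by rewrite setUC.
have e1 : w [set b; a] = w [set a; b] by rewrite setUC.
have e2 : w [set c; b] = w [set b; c] by rewrite setUC.
have e3 : w [set d; c] = w [set c; d] by rewrite setUC.
have e4 : w [set a; d] = w [set d; a] by rewrite setUC.
have ba : b != a by rewrite eq_sym.
have ca : c != a by rewrite eq_sym.
have da : d != a by rewrite eq_sym.
have cb : c != b by rewrite eq_sym.
have db : d != b by rewrite eq_sym.
have dc : d != c by rewrite eq_sym.
have F := @final _ _ E w x.
have [h1|h1s] := leP (w [set b; c]) (w [set a; b]);
have [h2|h2s] := leP (w [set b; c]) (w [set c; d]);
have [h3|h3s] := leP (w [set c; d]) (w [set d; a]);
have [h4|h4s] := leP (w [set d; a]) (w [set a; b]).
all: try have h1 := ltW h1s.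
all: try have h2 := ltW h2s.
all: try have h3 := ltW h3s.
all: try have h4 := ltW h4s.
all: first [ by apply: (F a b c d)
      | by apply: (F b c d a)
      | by apply: (F c d a b)
      | by apply: (F d a b c)
      | lra ].
Qed.
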